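(* Let $M$ be a finite matroid, $k\ge0$, let $e_1,\dots,e_k$ be distinct elements of $M$ and $C_0,C_1,\dots,C_k$ subsets of $M$ such that $|C_i|\ge3$ for $i=0,\dots,k$, $C_{i-1}\cap C_i=\{e_i\}$ for $i=1,\dots,k$, and $C_i\cap C_j=\emptyset$ whenever $|i-j|\ge2$. Let $e_0\in C_0\setminus\{e_1\}$ and, for $i=1,\dots,k$, let $e_i'\in C_{i-1}\setminus\{e_{i-1},e_i\}$. Define $M_0=M$ and $M_i=M_{i-1}/(C_{i-1}\setminus\{e_i,e_i'\})$ for $i=1,\dots,k$, and suppose $C_i$ is a circuit in $M_i$ for every $i=0,\dots,k$. Then $M$ contains a circuit of length at least $\sqrt{\sum_{i=0}^k|C_i|}$.
   Context: For a finite matroid $M$ with rank function $r_M$ and $F\subseteq M$, the contraction $M/F$ has ground set $M\setminus F$, and $F'\subseteq M\setminus F$ is independent in $M/F$ iff $F'$ is independent in $M$ and $r_M(F\cup F')=r_M(F)+r_M(F')$. A circuit is a minimal dependent set; its length is its number of elements. *)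

(* Defs.v *)
From mathcomp Require Import all_boot.
Set Implicit Arguments. Unset Strict Implicit. Unset Printing Implicit Defensive.

Record matroid (T : finType) := Matroid {
  ground : {set T};
  indep : {set T} -> bool }.

Definition is_matroid (T : finType) (M : matroid T) : Prop :=
  [/\ indep M set0,
      (forall I : {set T}, indep M I -> I \subset ground M),
      (forall I J : {set T}, J \subset I -> indep M I -> indep M J)
    & (forall I J : {set T}, indep M I -> indep M J -> #|I| < #|J| ->
         exists2 x, x \in J :\: I & indep M (x |: I))].

Definition rank (T : finType) (M : matroid T) (X : {set T}) : nat :=
  \max_(Y : {set T} | (Y \subset X) && indep M Y) #|Y|.

Definition contract (T : finType) (M : matroid T) (F : {set T}) : matroid T :=
  Matroid (ground M :\: F)
    (fun F' => [&& F' \subset ground M :\: F, indep M F' &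
                   rank M (F :|: F') == rank M F + rank M F']).

Definition circuit (T : finType) (M : matroid T) (C : {set T}) : Prop :=
  [/\ C \subset ground M, ~~ indep M C &
      forall D : {set T}, D \proper C -> indep M D].

Fixpoint contr_chain (T : finType) (M : matroid T) (C : nat -> {set T})
    (e e' : nat -> T) (i : nat) : matroid T :=
  match i with
  | 0 => M
  | j.+1 => contract (contr_chain M C e e' j) (C j :\: [set e j.+1; e' j.+1])
  end.

(* Main.v *)
Require Import Defs.
From mathcomp Require Import all_boot.
From mathcomp Require Import zify.
Set Implicit Arguments. Unset Strict Implicit. Unset Printing Implicit Defensive.

Lemma rank_ub (T : finType) (M : matroid T) (X Y : {set T}) :
  Y \subset X -> indep M Y -> #|Y| <= rank M X.
Proof. by move=> sYX iY; apply: (@leq_bigmax_cond _ (fun Z : {set T} => (Z \subset X) && indep M Z) (fun Z : {set T} => #|Z|) Y); rewrite sYX. Qed.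

Lemma rank_wit (T : finType) (M : matroid T) (X : {set T}) :
  is_matroid M -> exists Y : {set T}, [/\ Y \subset X, indep M Y & rank M X = #|Y|].
Proof.
case=> i0 _ _ _.
have : 0 < #|[pred Y : {set T} | (Y \subset X) && indep M Y]|.
  by apply/card_gt0P; exists set0; rewrite inE sub0set i0.
case/(eq_bigmax_cond (fun Y : {set T} => #|Y|)) => Y; rewrite inE => /andP[sYX iY] E.
exists Y; split => //; rewrite /rank -E; apply: eq_bigl => Z; by rewrite inE.
Qed.

Lemma rank_le_card (T : finType) (M : matroid T) (X : {set T}) : rank M X <= #|X|.
Proof. by apply/bigmax_leqP => Y /andP[sYX _]; apply: subset_leq_card. Qed.

Lemma rank_mono (T : finType) (M : matroid T) (X X' : {set T}) :
  is_matroid M -> X \subset X' -> rank M X <= rank M X'.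
Proof.
move=> HM sXX'; have [Y [sYX iY ->]] := rank_wit X HM.
by apply: rank_ub => //; apply: subset_trans sXX'.
Qed.

Lemma indep_rank (T : finType) (M : matroid T) (X : {set T}) :
  is_matroid M -> indep M X = (rank M X == #|X|).
Proof.
move=> HM; apply/idP/idP => [iX|/eqP E].
  by rewrite eqn_leq rank_le_card rank_ub.
have [Y [sYX iY EY]] := rank_wit X HM.
suff -> : X = Y by [].
by apply/esym/eqP; rewrite eqEcard sYX /= -EY E leqnn.
Qed.

Lemma rank_extend (T : finType) (M : matroid T) (I S : {set T}) :
  is_matroid M -> indep M I -> I \subset S ->
  exists J : {set T}, [/\ I \subset J, J \subset S, indep M J & #|J| = rank M S].
Proof.
move=> HM; case: (HM) => _ _ _ Haug.
move Hn: (rank M S - #|I|) => n; elim: n I Hn => [|n IH] I Hn iI sIS.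
  exists I; split => //; apply/eqP; rewrite eqn_leq rank_ub //=.
  by rewrite -subn_eq0 Hn.
have [B [sBS iB EB]] := rank_wit S HM.
have lt: #|I| < #|B| by rewrite -EB -subn_gt0 Hn.
have [x /setDP[xB xI] iIx] := Haug _ _ iI iB lt.
have Hn' : rank M S - #|x |: I| = n by rewrite cardsU1 xI add1n subnS Hn.
have sIS' : x |: I \subset S by rewrite subUset sub1set (subsetP sBS) .
have [J [sJ1 sJ2 iJ cJ]] := IH (x |: I) Hn' iIx sIS'.
exists J; split => //; apply: subset_trans sJ1; exact: subsetUr.
Qed.

Lemma rank_submod (T : finType) (M : matroid T) (X Y : {set T}) :
  is_matroid M -> rank M (X :|: Y) + rank M (X :&: Y) <= rank M X + rank M Y.
Proof.
move=> HM; case: (HM) => _ _ Hsub _.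
have [I [sI iI EI]] := rank_wit (X :&: Y) HM.
have [J [sIJ sJ iJ EJ]] := rank_extend HM iI (subset_trans sI (subset_trans (subsetIl X Y) (subsetUl X Y))).
rewrite -EJ EI.
have e1 : J :&: X :|: J :&: Y = J by rewrite -setIUr; apply/setIidPl.
have e2 : J :&: X :&: (J :&: Y) = J :&: (X :&: Y) by rewrite setIACA setIid.
have := cardsUI (J :&: X) (J :&: Y); rewrite e1 e2 => E.
have h1 : #|J :&: X| <= rank M X by apply: rank_ub; [exact: subsetIr | apply: Hsub iJ; exact: subsetIl].
have h2 : #|J :&: Y| <= rank M Y by apply: rank_ub; [exact: subsetIr | apply: Hsub iJ; exact: subsetIl].
have h3 : #|I| <= #|J :&: (X :&: Y)| by apply: subset_leq_card; rewrite subsetI sIJ.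
apply: leq_trans (leq_add h1 h2); rewrite -E leq_add2l //.
Qed.

Lemma rank_submod' (T : finType) (M : matroid T) (X Y Z : {set T}) :
  is_matroid M -> Z \subset X :&: Y -> rank M (X :|: Y) + rank M Z <= rank M X + rank M Y.
Proof.
move=> HM sZ; apply: leq_trans (rank_submod X Y HM).
by rewrite leq_add2l; apply: rank_mono.
Qed.

Lemma rank0 (T : finType) (M : matroid T) : rank M set0 = 0.
Proof. by apply/eqP; rewrite -leqn0 -(cards0 T) rank_le_card. Qed.

Lemma rank_subadd (T : finType) (M : matroid T) (X Y : {set T}) :
  is_matroid M -> rank M (X :|: Y) <= rank M X + rank M Y.
Proof.
move=> HM; apply: leq_trans (rank_submod' (Z := set0) HM (sub0set _)).
by rewrite rank0 addn0.
Qed.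

Lemma rank_U1 (T : finType) (M : matroid T) (x : T) (X : {set T}) :
  is_matroid M -> rank M (x |: X) <= rank M X + 1.
Proof.
move=> HM; apply: leq_trans (rank_subadd _ _ HM) _.
by rewrite addnC leq_add2l; apply: leq_trans (rank_le_card _ _) _; rewrite cards1.
Qed.

Lemma cl_mono (T : finType) (M : matroid T) (x : T) (X Y : {set T}) :
  is_matroid M -> Y \subset X -> rank M (x |: Y) = rank M Y -> rank M (x |: X) = rank M X.
Proof.
move=> HM sYX E; apply/anti_leq/andP; split; last by apply: rank_mono => //; exact: subsetUr.
have := rank_submod' (X := X) (Y := x |: Y) (Z := Y) HM.
rewrite subsetI sYX subsetUr => /(_ isT).
rewrite E setUCA (setUidPl sYX) leq_add2r; by [].
Qed.

Lemma cl_two (T : finType) (M : matroid T) (x y : T) (X : {set T}) :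
  is_matroid M -> rank M (x |: X) = rank M X -> rank M (y |: X) = rank M X ->
  rank M (x |: (y |: X)) = rank M X.
Proof.
move=> HM Ex Ey; apply/anti_leq/andP; split; last by apply: rank_mono => //; by apply/subsetP => z zX; rewrite !inE zX !orbT.
have := rank_submod' (X := x |: X) (Y := y |: X) (Z := X) HM.
rewrite subsetI !subsetUr => /(_ isT).
rewrite Ex Ey setUACA setUid setUA leq_add2r; by [].
Qed.

Lemma indepP (T : finType) (M : matroid T) (X : {set T}) :
  is_matroid M -> #|X| <= rank M X -> indep M X.
Proof. by move=> HM h; rewrite indep_rank // eqn_leq rank_le_card. Qed.

Lemma depP (T : finType) (M : matroid T) (X : {set T}) :
  is_matroid M -> rank M X < #|X| -> ~~ indep M X.
Proof. by move=> HM h; rewrite indep_rank // neq_ltn h. Qed.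

Lemma rank_indep (T : finType) (M : matroid T) (X : {set T}) :
  is_matroid M -> indep M X -> rank M X = #|X|.
Proof. by move=> HM; rewrite indep_rank // => /eqP. Qed.

Lemma hered (T : finType) (M : matroid T) (X Y : {set T}) :
  is_matroid M -> Y \subset X -> indep M X -> indep M Y.
Proof. by case=> _ _ H _; apply: H. Qed.

Lemma cl_set (T : finType) (M : matroid T) (S J : {set T}) :
  is_matroid M -> (forall x, x \in J -> rank M (x |: S) = rank M S) ->
  rank M (S :|: J) = rank M S.
Proof.
move=> HM; move Hn: #|J| => n; elim: n J Hn => [|n IH] J Hn HJ.
  by move/eqP: Hn; rewrite cards_eq0 => /eqP->; rewrite setU0.
have : 0 < #|J| by rewrite Hn.
case/card_gt0P => x xJ.
have E : S :|: J = x |: (S :|: (J :\ x)) by rewrite setUCA setD1K.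
rewrite E (cl_mono HM (subsetUl S (J :\ x)) (HJ x xJ)).
rewrite IH //; first by move: (cardsD1 x J); rewrite xJ Hn add1n => -[].
by move=> y /setD1P[_ yJ]; apply: HJ.
Qed.

Lemma contract_matroid (T : finType) (M : matroid T) (F : {set T}) :
  is_matroid M -> is_matroid (contract M F).
Proof.
move=> HM; case: (HM) => i0 ig _ Haug; split => /=.
- by rewrite sub0set i0 setU0 rank0 addn0 eqxx.
- by move=> I /and3P[].
- move=> I J sJI /and3P[sI iI /eqP EI]; have iJ := hered HM sJI iI.
  rewrite (subset_trans sJI sI) iJ /=.
  rewrite (rank_indep HM iJ); rewrite (rank_indep HM iI) in EI.
  apply/eqP/anti_leq/andP; split.
    by apply: leq_trans (rank_subadd _ _ HM) _; rewrite leq_add2l rank_le_card.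
  have E : F :|: I = (F :|: J) :|: (I :\: J).
    apply/setP => z; rewrite !inE; move: (subsetP sJI z).
    case: (z \in F); case: (z \in I); case: (z \in J) => //= h; exact: h.
  have := rank_subadd (F :|: J) (I :\: J) HM; rewrite -E EI.
  have := rank_le_card M (I :\: J); rewrite cardsD (setIidPr sJI).
  have := subset_leq_card sJI.
  move: (rank M (F :|: J)) (rank M (I :\: J)) => a b.
  lia.
- move=> I J /and3P[sI iI /eqP EI] /and3P[sJ iJ /eqP EJ] lt.
  rewrite (rank_indep HM iI) in EI; rewrite (rank_indep HM iJ) in EJ.
  case: (boolP [exists x in J :\: I, rank M (F :|: (x |: I)) == rank M (F :|: I) + 1]).
    case/exists_inP => x xJI /eqP Ex; exists x => //.
    have xI : x \notin I by case/setDP: xJI.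
    have cx : #|x |: I| = #|I| + 1 by rewrite cardsU1 xI addnC.
    have ix : indep M (x |: I).
      apply: indepP => //; rewrite cx.
      have := rank_subadd F (x |: I) HM; rewrite Ex EI; lia.
    rewrite ix /= (rank_indep HM ix) cx Ex EI addnA eqxx andbT.
    rewrite subUset sI andbT sub1set; apply: (subsetP sJ); by case/setDP: xJI.
  rewrite negb_exists_in => /forall_inP H.
  have cl : rank M ((F :|: I) :|: J) = rank M (F :|: I).
    apply: cl_set => // x xJ; case: (boolP (x \in I)) => xI.
      suff -> : x |: (F :|: I) = F :|: I by [].
      by apply/setUidPr; rewrite sub1set !inE xI orbT.
    apply/anti_leq/andP; split; last by apply: rank_mono => //; exact: subsetUr.
    have h1 := rank_U1 x (F :|: I) HM.
    have := H x; rewrite inE xI xJ setUCA => /(_ isT) /eqP h2.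
    move: (rank M (F :|: I)) (rank M (x |: (F :|: I))) h1 h2 => a b; lia.
  have := rank_mono (X := F :|: J) (X' := (F :|: I) :|: J) HM.
  rewrite setSU ?subsetUl // => /(_ isT).
  rewrite cl EI EJ; lia.
Qed.

Lemma circuit_exists (T : finType) (M : matroid T) (S : {set T}) :
  is_matroid M -> S \subset ground M -> ~~ indep M S ->
  exists X : {set T}, circuit M X /\ X \subset S.
Proof.
move=> HM sS dS.
have [X /minsetP [dX minX] sXS] :=
  @minset_exists _ (fun X : {set T} => ~~ indep M X) S dS.
exists X; split => //; split => //; first exact: subset_trans sXS sS.
move=> D /properP [sDX [x xX xD]]; apply: contraT => dD.
have := minX D dD sDX => E; by rewrite E xX in xD.
Qed.

Lemma basis_cl (T : finType) (M : matroid T) (B F Y : {set T}) :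
  is_matroid M -> B \subset F -> rank M B = rank M F ->
  rank M (B :|: Y) = rank M (F :|: Y).
Proof.
move=> HM sBF E; apply/anti_leq/andP; split.
  by apply: rank_mono => //; apply: setSU.
have := rank_submod' (X := F) (Y := B :|: Y) (Z := B) HM.
rewrite subsetI sBF subsetUl => /(_ isT).
have -> : F :|: (B :|: Y) = F :|: Y by rewrite setUA (setUidPl sBF).
rewrite E; lia.
Qed.

Lemma contract_dep (T : finType) (M : matroid T) (F D : {set T}) :
  is_matroid M -> D \subset ground M :\: F -> ~~ indep (contract M F) D ->
  rank M (F :|: D) < rank M F + #|D|.
Proof.
move=> HM sD; rewrite /= sD /=.
have h := rank_subadd F D HM; have h2 := rank_le_card M D.
case: (boolP (indep M D)) => iD /=.
  rewrite (rank_indep HM iD) in h *; move=> /eqP; lia.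
move=> _; have : rank M D < #|D| by rewrite ltn_neqAle h2 andbT; apply: contra iD => /eqP E; apply: indepP => //; rewrite E.
lia.
Qed.

Lemma contract_ind (T : finType) (M : matroid T) (F D : {set T}) :
  is_matroid M -> indep (contract M F) D ->
  rank M (F :|: D) = rank M F + #|D|.
Proof. by move=> HM /and3P [_ iD /eqP ->]; rewrite (rank_indep HM iD). Qed.

Lemma lift_circuit (T : finType) (M : matroid T) (F D : {set T}) :
  is_matroid M -> circuit (contract M F) D ->
  exists X : {set T}, circuit M X /\ D \subset X.
Proof.
move=> HM [sD dD minD]; rewrite /= in sD.
have [B [sBF iB EB]] := rank_wit F HM.
have EB' : rank M B = rank M F by rewrite (rank_indep HM iB) EB.
have Bg : B \subset ground M by case: HM => _ H _ _; apply: H.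
have disj : [disjoint B & D].
  rewrite -setI_eq0; apply/eqP/setP => z; rewrite !inE.
  apply/negP => /andP [zB zD]; have := subsetP sD z zD; rewrite !inE (subsetP sBF z zB) //.
have indD : forall d, d \in D -> indep M (B :|: (D :\ d)).
  move=> d dD'; have := minD (D :\ d) (properD1 dD') => /(contract_ind HM).
  rewrite -(basis_cl _ HM sBF EB') EB => E.
  apply: indepP => //; rewrite E; apply: leq_trans (leq_card_setU _ _) _; by [].
have depBD : ~~ indep M (B :|: D).
  apply: depP => //; rewrite (basis_cl _ HM sBF EB').
  rewrite cardsU (disjoint_setI0 disj) cards0 subn0 -EB.
  exact: contract_dep.
have sBDg : B :|: D \subset ground M by rewrite subUset Bg (subset_trans sD (subsetDl _ _)).
have [X [cX sX]] := circuit_exists HM sBDg depBD.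
exists X; split => //; apply/subsetP => d dD'; apply: contraT => dX.
  case: cX => _ dep _; suff iX : indep M X by rewrite iX in dep.
  apply: hered (indD d dD') => //.
  apply/subsetP => z zX; have := subsetP sX z zX; rewrite !inE.
  case/orP => [->//|zD]; rewrite zD andbT; apply/orP; right; by apply: contraNneq dX => <-.
Qed.

Lemma rank_lt (T : finType) (M : matroid T) (X : {set T}) :
  is_matroid M -> ~~ indep M X -> rank M X < #|X|.
Proof.
move=> HM dX; rewrite ltn_neqAle rank_le_card andbT.
by apply: contra dX => /eqP E; apply: indepP => //; rewrite E.
Qed.

Lemma cl_of_dep (T : finType) (M : matroid T) (x : T) (S Z : {set T}) :
  is_matroid M -> indep M S -> Z \subset x |: S -> ~~ indep M Z ->
  rank M (x |: S) = rank M S.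
Proof.
move=> HM iS sZ dZ.
have dxS : ~~ indep M (x |: S) by apply: contra dZ; apply: hered.
have h1 := rank_lt HM dxS.
have h2 : #|x |: S| <= #|S| + 1 by rewrite cardsU1 addnC leq_add2l leq_b1.
have h3 : rank M S <= rank M (x |: S) by apply: rank_mono => //; exact: subsetUr.
rewrite (rank_indep HM iS) in h3 *; lia.
Qed.

Lemma step (T : finType) (M : matroid T) (Cc D : {set T}) (a a' f : T) :
  is_matroid M -> circuit M Cc -> a \in Cc -> a' \in Cc -> a != a' ->
  circuit (contract M (Cc :\: [set a; a'])) D -> a \in D ->
  D :&: Cc \subset [set a] -> f \in Cc :\: [set a; a'] ->
  exists X : {set T}, [/\ circuit M X, X \subset D :|: Cc, f \in X & #|D| < #|X|].
Proof.
move=> HM cC aC a'C naa' cD aD DC fF.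
set F := Cc :\: [set a; a'] in cD fF *.
case: (cC) => sCg dC minC; case: (cD) => sD dD minD; rewrite /= in sD.
have aF : a \notin F by rewrite !inE eqxx.
have a'F : a' \notin F by rewrite !inE eqxx orbT.
have fC : f \in Cc by move: fF; rewrite !inE => /andP[].
have DnF : forall z, z \in D -> z \notin F.
  by move=> z zD; have := subsetP sD z zD; rewrite inE => /andP[].
have a'D : a' \notin D.
  apply/negP => a'D; have := subsetP DC a'; rewrite !inE a'D a'C => /(_ isT) /eqP E.
  by rewrite E eqxx in naa'.
set A := D :\ a.
have AC : forall z, z \in A -> z \notin Cc.
  move=> z /setD1P [za zD]; apply/negP => zC.
  by have := subsetP DC z; rewrite !inE zD zC (negbTE za) => /(_ isT).
have FC : F \subset Cc by exact: subsetDl.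
have iF : indep M F.
  apply: minC; apply/properP; split => //; exists a => //.
have rF : rank M F = #|F| by apply: rank_indep.
have Ceq : Cc = a |: (a' |: F).
  apply/setP => z; rewrite !inE; case: (eqVneq z a) => [->|za]; first by rewrite aC.
  case: (eqVneq z a') => [->|za'] //=.
have cardC : #|Cc| = #|F| + 2.
  rewrite Ceq cardsU1 in_setU1 (negbTE naa') (negbTE aF) cardsU1 (negbTE a'F).
  move: #|F| => n; by rewrite [RHS]addnC.
clearbody F.
have raF : rank M (a |: F) = #|F| + 1.
  have i : indep M (a |: F).
    apply: minC; apply/properP; split; first by rewrite subUset sub1set aC FC.
    by exists a' => //; rewrite !inE eq_sym (negbTE naa') (negbTE a'F).
  by rewrite (rank_indep HM i) cardsU1 (negbTE aF) addnC.
have ra'F : rank M (a' |: F) = #|F| + 1.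
  have i : indep M (a' |: F).
    apply: minC; apply/properP; split; first by rewrite subUset sub1set a'C FC.
    by exists a => //; rewrite !inE (negbTE naa') (negbTE aF).
  by rewrite (rank_indep HM i) cardsU1 (negbTE a'F) addnC.
have rC : rank M Cc <= #|F| + 1.
  have := rank_lt HM dC.
  by rewrite cardC addnS ltnS.
have cl_a' : rank M (a' |: (a |: F)) = rank M (a |: F).
  rewrite setUCA -Ceq raF; apply/anti_leq/andP; split => //.
  by rewrite -raF; apply: rank_mono => //; rewrite Ceq setUCA; exact: subsetUr.
have cl_a : rank M (a |: (a' |: F)) = rank M (a' |: F).
  rewrite -Ceq ra'F; apply/anti_leq/andP; split => //.
  by rewrite -ra'F; apply: rank_mono => //; rewrite Ceq; exact: subsetUr.
have AD : A \subset D by exact: subsetDl.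
have aA : a \notin A by rewrite !inE eqxx.
have a'A : a' \notin A by apply: contra a'D; apply: (subsetP AD).
have fA : f \notin A by apply/negP => /(subsetP AD) /DnF; rewrite fF.
have cD1 : #|D| = #|A| + 1 by rewrite (cardsD1 a D) aD addnC.
have Dg : D \subset ground M by apply: subset_trans sD (subsetDl _ _).
have Fg : F \subset ground M by apply: subset_trans FC sCg.
have aS0 : a \notin F :|: A by rewrite inE negb_or aF aA.
have a'S0 : a' \notin F :|: A by rewrite inE negb_or a'F a'A.
have cS0 : #|F :|: A| = #|F| + #|A|.
  rewrite cardsU; suff -> : F :&: A = set0 by rewrite cards0 subn0.
  apply/setP => z; rewrite !inE; apply/negP => /and3P [zF _ zD].
  by have := DnF z zD; rewrite zF.
have rS0 : rank M (F :|: A) = #|F| + #|A|.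
  by rewrite (contract_ind HM (minD _ (properD1 aD))) rF.
have iS0 : indep M (F :|: A) by apply: indepP => //; rewrite rS0 cS0.
have DFeq : F :|: D = a |: (F :|: A).
  apply/setP => z; rewrite !inE; case: (eqVneq z a) => [->|za] /=; first by rewrite aD orbT.
  by [].
have rZ0 : rank M (a |: (F :|: A)) < #|F| + #|A| + 1.
  have := contract_dep HM sD dD; rewrite DFeq rF cD1 addnA; by [].
have caS0 : #|a |: (F :|: A)| = #|F| + #|A| + 1 by rewrite cardsU1 aS0 cS0 addnC.
have ca'S0 : #|a' |: (F :|: A)| = #|F| + #|A| + 1 by rewrite cardsU1 a'S0 cS0 addnC.
have dep0 : ~~ indep M (a |: (F :|: A)) by apply: depP => //; rewrite caS0.
have cl1 : rank M (a' |: (a |: (F :|: A))) = rank M (a |: (F :|: A)).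
  apply: (cl_mono (Y := a |: F)) => //; apply: setUS; exact: subsetUl.
have dep1 : ~~ indep M (a' |: (F :|: A)).
  apply: depP => //; rewrite ca'S0; apply: leq_ltn_trans rZ0; rewrite -cl1.
  by apply: rank_mono => //; apply: setUS; exact: subsetUr.
have g0 : a |: (F :|: A) \subset ground M.
  by rewrite subUset sub1set (subsetP sCg a aC) subUset Fg (subset_trans AD Dg).
have g1 : a' |: (F :|: A) \subset ground M.
  by rewrite subUset sub1set (subsetP sCg a' a'C) subUset Fg (subset_trans AD Dg).
have [Z [cZ sZ]] := circuit_exists HM g0 dep0.
have [Z' [cZ' sZ']] := circuit_exists HM g1 dep1.
have indFD : forall b, b \in D -> indep M (F :|: (D :\ b)).
  move=> b bD; apply: indepP => //.
  rewrite (contract_ind HM (minD _ (properD1 bD))) rF; exact: leq_card_setU.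
have AZ : A \subset Z.
  apply/subsetP => b bA; apply: contraT => bZ.
  case: cZ => _ dZ _; suff iZ : indep M Z by rewrite iZ in dZ.
  have bD : b \in D by apply: (subsetP AD).
  apply: hered (indFD b bD) => //; apply/subsetP => z zZ.
  have := subsetP sZ z zZ; rewrite !inE.
  case/orP => [/eqP ->|/orP [->//|/andP [za zD]]].
    by rewrite aD andbT orbC; apply/orP; left; apply: contraTneq bA => <-; exact: aA.
  rewrite zD andbT; apply/orP; right; by apply: contraNneq bZ => <-.
have AZ' : A \subset Z'.
  apply/subsetP => b bA; apply: contraT => bZ.
  case: cZ' => _ dZ _; suff iZ : indep M Z' by rewrite iZ in dZ.
  have bD : b \in D by apply: (subsetP AD).
  set V := F :|: (A :\ b).
  have aV : a \notin V by rewrite in_setU negb_or aF in_setD1 negb_and aA orbT.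
  have iaV : indep M (a |: V).
    apply: hered (indFD b bD) => //; apply/subsetP => z; rewrite !inE.
    case/orP => [/eqP ->|/orP [->//|/and3P [zb za zD]]].
      by rewrite aD andbT orbC; apply/orP; left; apply: contraTneq bA => <-; exact: aA.
    by rewrite zb zD orbT.
  have ia'V : indep M (a' |: V).
    apply: indepP => //.
    have h1 : #|a' |: V| <= #|V| + 1 by rewrite cardsU1 addnC leq_add2l leq_b1.
    have h2 : rank M (a |: V) = #|V| + 1 by rewrite (rank_indep HM iaV) cardsU1 aV addnC.
    have h3 : rank M (a |: V) <= rank M (a |: (a' |: V)).
      by apply: rank_mono => //; apply: setUS; exact: subsetUr.
    have h4 : rank M (a |: (a' |: V)) = rank M (a' |: V).
      apply: (cl_mono (Y := a' |: F)) => //; apply: setUS; exact: subsetUl.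
    by rewrite -h4; apply: leq_trans h3; rewrite h2.
  apply: hered ia'V => //; apply/subsetP => z zZ.
  have := subsetP sZ' z zZ; rewrite !inE.
  case/orP => [->//|/orP [->|zA]]; first by rewrite orbT.
  by rewrite zA andbT; apply/orP; right; apply/orP; right; apply: contraNneq bZ => <-.
have fZZ' : (f \in Z) || (f \in Z').
  apply: contraT; rewrite negb_or => /andP [fZ fZ'].
  set S := (F :|: A) :\ f.
  have iS : indep M S by apply: hered iS0 => //; exact: subsetDl.
  have sZS : Z \subset a |: S.
    apply/subsetP => z zZ; have := subsetP sZ z zZ; rewrite !inE.
    case/orP => [->//|zFA]; rewrite zFA andbT; apply/orP; right; by apply: contraNneq fZ => <-.
  have sZS' : Z' \subset a' |: S.
    apply/subsetP => z zZ; have := subsetP sZ' z zZ; rewrite !inE.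
    case/orP => [->//|zFA]; rewrite zFA andbT; apply/orP; right; by apply: contraNneq fZ' => <-.
  have E1 := cl_of_dep HM iS sZS (let: And3 _ d _ := cZ in d).
  have E2 := cl_of_dep HM iS sZS' (let: And3 _ d _ := cZ' in d).
  have E3 := cl_two HM E1 E2.
  have iCf : indep M (Cc :\ f) by apply: minC; exact: properD1.
  have rCf : rank M (f |: (Cc :\ f)) = rank M (Cc :\ f).
    rewrite setD1K // (rank_indep HM iCf); apply/anti_leq/andP; split.
      have := rank_lt HM dC; rewrite (cardsD1 f Cc) fC add1n ltnS; by [].
    by rewrite -(rank_indep HM iCf); apply: rank_mono => //; exact: subsetDl.
  have sCS : Cc :\ f \subset a |: (a' |: S).
    apply/subsetP => z; rewrite Ceq !inE => /andP [zf /or3P [->|->|zF]]; rewrite ?orbT //.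
    by rewrite zf zF /= !orbT.
  have E4 := cl_mono HM sCS rCf.
  have h1 : rank M (F :|: A) <= rank M (f |: (a |: (a' |: S))).
    apply: rank_mono => //; apply/subsetP => z zS0; rewrite !in_setU1.
    case: (eqVneq z f) => //= zf; by rewrite /S in_setD1 zf zS0 !orbT.
  have h2 : #|S| < #|F :|: A|.
    rewrite (cardsD1 f (F :|: A)) [f \in _]inE fF add1n; by [].
  have h3 := rank_le_card M S.
  move: h1; rewrite E4 E3 rS0 -cS0 => h1.
  have := leq_ltn_trans (leq_trans h1 h3) h2; by rewrite ltnn.
have fD : f \notin D by apply/negP => /DnF; rewrite fF.
have sub0 : forall x, x \in Cc -> x |: (F :|: A) \subset D :|: Cc.
  move=> x xC; rewrite subUset sub1set inE xC orbT subUset (subset_trans FC (subsetUr _ _)).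
  exact: subset_trans AD (subsetUl _ _).
case/orP: fZZ' => [fZ|fZ'].
  have aZ : a \in Z.
    apply: contraT => aZ; case: cZ => _ dZ _; suff iZ : indep M Z by rewrite iZ in dZ.
    apply: hered iS0 => //; apply/subsetP => z zZ; have := subsetP sZ z zZ; rewrite in_setU1.
    by case/orP => // /eqP zE; rewrite -zE zZ in aZ.
  exists Z; split => //; first exact: subset_trans sZ (sub0 a aC).
  have sfD : f |: D \subset Z.
    rewrite subUset sub1set fZ; apply/subsetP => z zD; case: (eqVneq z a) => [->//|za].
    by apply: (subsetP AZ); rewrite in_setD1 za zD.
  by apply: leq_trans (subset_leq_card sfD); rewrite cardsU1 fD.
have a'Z : a' \in Z'.
  apply: contraT => aZ; case: cZ' => _ dZ _; suff iZ : indep M Z' by rewrite iZ in dZ.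
  apply: hered iS0 => //; apply/subsetP => z zZ; have := subsetP sZ' z zZ; rewrite in_setU1.
  by case/orP => // /eqP zE; rewrite -zE zZ in aZ.
exists Z'; split => //; first exact: subset_trans sZ' (sub0 a' a'C).
have sfA : a' |: (f |: A) \subset Z'.
  by rewrite subUset sub1set a'Z subUset sub1set fZ' AZ'.
have fa' : f != a'.
  by apply: contraTneq fF => ->; exact: a'F.
apply: leq_trans (subset_leq_card sfA).
have a'f : a' != f by rewrite eq_sym.
rewrite cardsU1 cardsU1 in_setU1 (negbTE a'f) (negbTE a'A) (negbTE fA) cD1.
by rewrite addnC.
Qed.

Lemma chain_matroid (T : finType) (M : matroid T) (C : nat -> {set T}) (e e' : nat -> T) j :
  is_matroid M -> is_matroid (contr_chain M C e e' j).
Proof. by move=> HM; elim: j => //= j IH; apply: contract_matroid. Qed.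

Lemma chain_lift (T : finType) (M : matroid T) (C : nat -> {set T}) (e e' : nat -> T) j D :
  is_matroid M -> circuit (contr_chain M C e e' j) D ->
  exists X : {set T}, circuit M X /\ D \subset X.
Proof.
move=> HM; elim: j D => [|j IH] D /= cD; first by exists D.
have [Y [cY sDY]] := lift_circuit (chain_matroid C e e' j HM) cD.
have [X [cX sYX]] := IH Y cY; exists X; split => //; exact: subset_trans sYX.
Qed.

Lemma chain_long (T : finType) (M : matroid T) (k : nat)
    (e e' : nat -> T) (C : nat -> {set T}) :
  is_matroid M ->
  (forall i j, 1 <= i <= k -> 1 <= j <= k -> e i = e j -> i = j) ->
  (forall i, i <= k -> 3 <= #|C i|) ->
  (forall i, 1 <= i <= k -> C i.-1 :&: C i = [set e i]) ->
  (forall i j, i <= k -> j <= k -> i + 2 <= j -> C i :&: C j = set0) ->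
  (forall i, 1 <= i <= k -> e' i \in C i.-1 :\: [set e i.-1; e i]) ->
  (forall i, i <= k -> circuit (contr_chain M C e e' i) (C i)) ->
  forall n, n <= k -> exists D : {set T},
    [/\ circuit (contr_chain M C e e' (k - n)) D,
        (forall z, z \in D -> exists2 i, (k - n <= i) && (i <= k) & z \in C i),
        (0 < k - n -> e (k - n) \in D) & k + 1 <= #|D| + (k - n)].
Proof.
move=> HM He HC3 HCi HCd He' Hc.
elim=> [|n IH] nk.
  rewrite subn0; exists (C k); split; first exact: Hc.
  - by move=> z zC; exists k => //; rewrite leqnn.
  - move=> k0; have := HCi k; rewrite k0 leqnn => /(_ isT) /setP /(_ (e k)).
    by rewrite !inE eqxx => /andP [].
  - by rewrite addnC leq_add2r; apply: leq_trans (HC3 k (leqnn k)).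
have [D [cD UD eD szD]] := IH (ltnW nk).
set j := k - n.+1.
have jE : k - n = j.+1 by rewrite /j subnS prednK // subn_gt0.
rewrite jE in cD UD eD szD.
have jk : j < k by rewrite /j; clear -nk; lia.
have j1 : 1 <= j.+1 <= k by rewrite ltn0Sn.
have hint := HCi j.+1 j1; rewrite /= in hint.
have aC : e j.+1 \in C j.
  by move/setP: hint => /(_ (e j.+1)); rewrite !inE eqxx => /andP [].
have ha' := He' j.+1 j1; rewrite /= in ha'.
have a'C : e' j.+1 \in C j by move: ha'; rewrite inE => /andP [].
have naa' : e j.+1 != e' j.+1.
  by move: ha'; rewrite !inE negb_or => /andP [/andP [_ ?] _]; rewrite eq_sym.
have DC : D :&: C j \subset [set e j.+1].
  apply/subsetP => z /setIP [zD zC]; have [i /andP [ji ik] zi] := UD z zD.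
  case: (eqVneq i j.+1) => [iE|ine].
    by rewrite -hint inE zC -iE zi.
  have := HCd j i (ltnW jk) ik; rewrite (_ : j + 2 <= i); last first.
    by move: ji ine; clear; move=> ji ine; lia.
  by move=> /(_ isT) /setP /(_ z); rewrite !inE zC zi.
have [f fF fj] : exists2 f, f \in C j :\: [set e j.+1; e' j.+1] & (0 < j -> f = e j).
  case: (posnP j) => [j0|jpos].
    have : 0 < #|C j :\: [set e j.+1; e' j.+1]|.
      rewrite cardsD; have h3 := HC3 j (ltnW jk).
      have h2 : #|C j :&: [set e j.+1; e' j.+1]| <= 2.
        apply: leq_trans (subset_leq_card (subsetIr _ _)) _; rewrite cards2; by case: (_ != _).
      move: h3 h2; clear; move: (#|C j|) (#|_ :&: _|) => p q; lia.
    by case/card_gt0P => f fF; exists f => //; rewrite j0.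
  exists (e j) => //.
  have j1' : 1 <= j <= k by rewrite jpos (ltnW jk).
  have ej : e j \in C j.
    by move/setP: (HCi j j1') => /(_ (e j)); rewrite !inE eqxx => /andP [].
  rewrite !inE ej andbT negb_or; apply/andP; split.
    by apply/eqP => E; have := He _ _ j1' j1 E; clear; lia.
  by move: ha'; rewrite !inE negb_or => /andP [/andP [h _] _]; rewrite eq_sym.
have [X [cX sX fX lt]] := step (chain_matroid C e e' j HM) (Hc j (ltnW jk)) aC a'C naa' cD
  (eD (ltn0Sn j)) DC fF.
exists X; split => //.
- move=> z /(subsetP sX); rewrite inE => /orP [zD|zC].
    have [i /andP [ji ik] zi] := UD z zD; exists i => //; rewrite ik andbT; exact: ltnW.
  by exists j => //; rewrite leqnn (ltnW jk).
- by move=> /fj <-.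
- by move: szD lt; clear; move: (#|D|) (#|X|) => p q; lia.
Qed.

Theorem corollary3p13 (T : finType) (M : matroid T) (k : nat)
    (e e' : nat -> T) (C : nat -> {set T}) :
  is_matroid M ->
  (forall i j, 1 <= i <= k -> 1 <= j <= k -> e i = e j -> i = j) ->
  (forall i, i <= k -> 3 <= #|C i|) ->
  (forall i, 1 <= i <= k -> C i.-1 :&: C i = [set e i]) ->
  (forall i j, i <= k -> j <= k -> i + 2 <= j -> C i :&: C j = set0) ->
  e 0 \in C 0 :\: (if 1 <= k then [set e 1] else set0) ->
  (forall i, 1 <= i <= k -> e' i \in C i.-1 :\: [set e i.-1; e i]) ->
  (forall i, i <= k -> circuit (contr_chain M C e e' i) (C i)) ->
  exists D : {set T}, circuit M D /\ \sum_(i < k.+1) #|C i| <= #|D| ^ 2.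
Proof.
move=> HM He HC3 HCi HCd _ He' Hc.
have [D [cD _ _ szD]] := chain_long HM He HC3 HCi HCd He' Hc (leqnn k).
rewrite subnn addn0 in cD szD.
pose i0 := [arg max_(i > (ord0 : 'I_k.+1)) #|C i|].
have hmax : forall i : 'I_k.+1, #|C i| <= #|C i0|.
  by rewrite /i0; case: arg_maxnP => //= i _ H j; apply: H.
have hsum : \sum_(i < k.+1) #|C i| <= k.+1 * #|C i0|.
  apply: (@leq_trans (\sum_(i < k.+1) #|C i0|)).
    by apply: leq_sum => i _; apply: hmax.
  by rewrite sum_nat_const card_ord.
have [X [cX sX]] := chain_lift HM (Hc i0 (ltn_ord i0)).
have cX0 := subset_leq_card sX.
case: (leqP k.+1 #|C i0|) => hk.
  exists X; split => //; apply: leq_trans hsum _; rewrite -mulnn.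
  by apply: leq_mul; [apply: leq_trans hk cX0 | exact: cX0].
exists D; split => //; apply: leq_trans hsum _; rewrite -mulnn.
have kD : k.+1 <= #|D| by rewrite -addn1.
by apply: leq_mul => //; apply: leq_trans (ltnW hk) kD.
Qed.
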